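(* Let $\gamma$ be the boundary of a magnetic billiard with field magnitude $\beta>0$ having the $\delta$-Gutkin property, where $\gamma$ is parametrized by the angle $\varphi$ of its tangent vector with a fixed direction, so that, identifying $\mathbb{R}^2$ with $\mathbb{C}$, $\frac{d\gamma}{d\varphi}=\rho(\varphi)e^{i\varphi}$ with $\rho$ the radius of curvature. Suppose $d$ is a function such that for every $\bar\varphi$ the Larmor arc (circle of radius $1/\beta$ traversed counterclockwise) inside $\Omega$ that starts at $\gamma(\bar\varphi+d(\bar\varphi))$ making angle $\delta$ with $\gamma$ (velocity $e^{i(\bar\varphi+d(\bar\varphi)+\delta)}$) ends at $\gamma(\bar\varphi-d(\bar\varphi))$ making angle $\delta$ with $\gamma$ (velocity $e^{i(\bar\varphi-d(\bar\varphi)-\delta)}$), its velocity angle increasing from $\bar\varphi+d+\delta$ to $\bar\varphi-d+2\pi-\delta$. Then for every $\bar\varphi$ $$\int_{\bar\varphi-d(\bar\varphi)}^{\bar\varphi+d(\bar\varphi)}\rho(\xi)e^{i\xi}\,d\xi=\frac{2}{\beta}\sin\big(\delta+d(\bar\varphi)\big)e^{i\bar\varphi}.$$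
   Context: Magnetic billiard in a domain $\Omega$ with boundary $\gamma$: a particle moves with unit speed along arcs of counterclockwise circles of radius $1/\beta$ (Larmor arcs) and reflects at $\gamma$ by the law of geometric optics. The $\delta$-Gutkin property means every Larmor arc entering $\Omega$ making angle $\delta$ with $\gamma$ exits $\Omega$ making angle $\delta$ with $\gamma$. Writing $\varphi_1=\bar\varphi-d(\bar\varphi)$, $\varphi_2=\bar\varphi+d(\bar\varphi)$, one has $\bar\varphi=(\varphi_1+\varphi_2)/2$, $d=(\varphi_2-\varphi_1)/2$. *)

(* Defs.v *)
From Stdlib Require Import Reals Lra.
From Coquelicot Require Import Coquelicot.
Open Scope R_scope.

(* R^2 is identified with C: a point x + i y is the pair (x, y),
   e^{i t} is (cos t, sin t). *)

(* Larmor arc of radius 1/beta, traversed counterclockwise with unit speed,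
   with centre (cx, cy), whose velocity at arclength s = 0 is e^{i th0}.
   Its position at arclength s is  c - (i/beta) e^{i (th0 + beta s)},
   so its velocity at arclength s is e^{i (th0 + beta s)}. *)
Definition larmor_x (beta cx th0 s : R) : R := cx + / beta * sin (th0 + beta * s).
Definition larmor_y (beta cy th0 s : R) : R := cy - / beta * cos (th0 + beta * s).

(* Main.v *)
Require Import Defs.
From Stdlib Require Import Reals Lra.
From Coquelicot Require Import Coquelicot.
Open Scope R_scope.

Theorem proposition3p3
  (beta delta : R) (gx gy rho d : R -> R)
  (hbeta : 0 < beta)
  (hrho : forall phi, continuous rho phi)
  (hgx : forall phi, is_derive gx phi (rho phi * cos phi))
  (hgy : forall phi, is_derive gy phi (rho phi * sin phi))
  (harc : forall phib,
     exists (cx cy L : R),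
       0 <= L /\
       phib + d phib + delta + beta * L = phib - d phib + 2 * PI - delta /\
       larmor_x beta cx (phib + d phib + delta) 0 = gx (phib + d phib) /\
       larmor_y beta cy (phib + d phib + delta) 0 = gy (phib + d phib) /\
       larmor_x beta cx (phib + d phib + delta) L = gx (phib - d phib) /\
       larmor_y beta cy (phib + d phib + delta) L = gy (phib - d phib)) :
  forall phib,
    RInt (fun xi => rho xi * cos xi) (phib - d phib) (phib + d phib)
      = 2 / beta * sin (delta + d phib) * cos phib /\
    RInt (fun xi => rho xi * sin xi) (phib - d phib) (phib + d phib)
      = 2 / beta * sin (delta + d phib) * sin phib.
Proof.
  intros phib.
  destruct (harc phib) as (cx & cy & L & _ & HL & H1 & H2 & H3 & H4).
  unfold larmor_x, larmor_y in *.
  assert (HbL : phib + d phib + delta + beta * L = (phib - d phib - delta) + 2 * PI) by lra.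
  rewrite HbL in H3, H4. replace (phib - d phib - delta + 2 * PI) with (phib - d phib - delta + 2 * INR 1 * PI) in H3, H4 by (simpl; ring). rewrite sin_period in H3. rewrite cos_period in H4.
  rewrite Rmult_0_r, Rplus_0_r in H1, H2.
  assert (Ex : RInt (fun xi => rho xi * cos xi) (phib - d phib) (phib + d phib) = gx (phib + d phib) - gx (phib - d phib)).
  { apply is_RInt_unique. apply (is_RInt_derive gx). intros; apply hgx.
    intros x _. apply (continuous_mult rho cos); [apply hrho|].
    apply continuity_pt_filterlim, continuity_cos. }
  assert (Ey : RInt (fun xi => rho xi * sin xi) (phib - d phib) (phib + d phib) = gy (phib + d phib) - gy (phib - d phib)).
  { apply is_RInt_unique. apply (is_RInt_derive gy). intros; apply hgy.
    intros x _. apply (continuous_mult rho sin); [apply hrho|].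
    apply continuity_pt_filterlim, continuity_sin. }
  rewrite Ex, Ey, <- H1, <- H2, <- H3, <- H4.
  assert (hb : beta <> 0) by lra.
  replace (phib + d phib + delta) with (phib + (delta + d phib)) by ring.
  replace (phib - d phib - delta) with (phib - (delta + d phib)) by ring.
  rewrite (sin_plus phib (delta + d phib)), (sin_minus phib (delta + d phib)), (cos_plus phib (delta + d phib)), (cos_minus phib (delta + d phib)).
  split.
  all: lazymatch goal with |- ?x = ?y => change (@eq R x y) end; field; exact hb.
Qed.
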